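(* Let $P:\mathcal{C}^{\mathrm{op}}\to\mathbf{Pos}$ be a universal slat-doctrine and suppose $\mathcal{C}$ has exponents. Then the existential completion $P^{ex}$ is both existential and universal.
   Context: A slat-doctrine is a functor $P:\mathcal{C}^{\mathrm{op}}\to\mathbf{Pos}$ where $\mathcal{C}$ has finite products; for $f:X\to Y$, $P_f:P(Y)\to P(X)$ is reindexing. $P$ is existential (resp. universal) if for all objects $A_1,A_2$ and $i=1,2$ the map $P_{\mathrm{pr}_i}:P(A_i)\to P(A_1\times A_2)$ has a left adjoint $\exists_{\mathrm{pr}_i}$ (resp. a right adjoint $\forall_{\mathrm{pr}_i}$) and these satisfy the Beck–Chevalley condition: for every pullback square with projections $\mathrm{pr}':X'\to A'$, $\mathrm{pr}:X\to A$ and arrows $f:A'\to A$, $f':X'\to X$ with $\mathrm{pr}\, f'=f\,\mathrm{pr}'$, one has $\exists_{\mathrm{pr}'}P_{f'}=P_f\exists_{\mathrm{pr}}$ (resp. $\forall_{\mathrm{pr}'}P_{f'}=P_f\forall_{\mathrm{pr}}$). Existential completion: $P^{ex}(A)$ is the poset (reflection of the preorder) of triples $(A,B,\alpha)$ with $\alpha\in P(A\times B)$, where $(A,B,\alpha)\le(A,C,\beta)$ iff there is $f:A\times B\to C$ with $\alpha\le P_{\langle\mathrm{pr}_A,f\rangle}(\beta)$; for $f:A\to C$, $P^{ex}_f(C,D,\gamma)=(A,D,P_{f\times 1_D}(\gamma))$. *)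

(* Defs.v *)
Set Implicit Arguments.
Unset Strict Implicit.

Record CatFP := {
  ob : Type;
  hom : ob -> ob -> Type;
  idm : forall A, hom A A;
  comp : forall A B C, hom B C -> hom A B -> hom A C;
  comp_idl : forall A B (f : hom A B), comp (idm B) f = f;
  comp_idr : forall A B (f : hom A B), comp f (idm A) = f;
  comp_assoc : forall A B C D (h : hom C D) (g : hom B C) (f : hom A B),
      comp h (comp g f) = comp (comp h g) f;
  term : ob;
  bang : forall A, hom A term;
  bang_uniq : forall A (f : hom A term), f = bang A;
  prod : ob -> ob -> ob;
  pr1 : forall A B, hom (prod A B) A;
  pr2 : forall A B, hom (prod A B) B;
  pair : forall X A B, hom X A -> hom X B -> hom X (prod A B);
  pair_pr1 : forall X A B (f : hom X A) (g : hom X B), comp (pr1 A B) (pair f g) = f;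
  pair_pr2 : forall X A B (f : hom X A) (g : hom X B), comp (pr2 A B) (pair f g) = g;
  pair_uniq : forall X A B (h : hom X (prod A B)),
      h = pair (comp (pr1 A B) h) (comp (pr2 A B) h)
}.

Arguments hom : clear implicits.
Arguments idm {c} A.
Arguments comp {c A B C} _ _.
Arguments bang {c} A.
Arguments prod {c} _ _.
Arguments pr1 {c} A B.
Arguments pr2 {c} A B.
Arguments pair {c X A B} _ _.
Arguments term {c}.

Definition fprod (C : CatFP) (A A' B B' : ob C) (f : hom C A A') (g : hom C B B')
  : hom C (prod A B) (prod A' B') :=
  pair (comp f (pr1 A B)) (comp g (pr2 A B)).

Definition has_exponents (C : CatFP) : Prop :=
  forall A B : ob C, exists (E : ob C) (ev : hom C (prod E A) B),
    forall (X : ob C) (g : hom C (prod X A) B),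
      exists h : hom C X E,
        comp ev (fprod h (idm A)) = g /\
        (forall h' : hom C X E, comp ev (fprod h' (idm A)) = g -> h' = h).

Record Doctrine (C : CatFP) := {
  fib : ob C -> Type;
  ple : forall A, fib A -> fib A -> Prop;
  reidx : forall A B, hom C A B -> fib B -> fib A
}.

Arguments fib {C} d A.
Arguments ple {C d A} _ _.
Arguments reidx {C d A B} f _.

Definition is_doctrine (C : CatFP) (P : Doctrine C) : Prop :=
  (forall A (a : fib P A), ple a a) /\
  (forall A (a b c : fib P A), ple a b -> ple b c -> ple a c) /\
  (forall A B (f : hom C A B) (a b : fib P B), ple a b -> ple (reidx f a) (reidx f b)) /\
  (forall A (a : fib P A), reidx (idm A) a = a) /\
  (forall A B D (f : hom C A B) (g : hom C B D) (a : fib P D),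
      reidx (comp g f) a = reidx f (reidx g a)).

(** [P] is a slat-doctrine: a functor C^op -> Pos (fibres are posets). *)
Definition is_pos_doctrine (C : CatFP) (P : Doctrine C) : Prop :=
  is_doctrine P /\
  (forall A (a b : fib P A), ple a b -> ple b a -> a = b).

(** Equality in the poset reflection of a fibre = mutual inequality. *)
Definition peq (C : CatFP) (P : Doctrine C) A (a b : fib P A) : Prop :=
  ple a b /\ ple b a.

Definition existential (C : CatFP) (P : Doctrine C) : Prop :=
  exists (ex1 : forall A B, fib P (prod A B) -> fib P A)
         (ex2 : forall A B, fib P (prod A B) -> fib P B),
    (forall A B (a : fib P (prod A B)) (b : fib P A),
        ple (ex1 A B a) b <-> ple a (reidx (pr1 A B) b)) /\
    (forall A B (a : fib P (prod A B)) (b : fib P B),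
        ple (ex2 A B a) b <-> ple a (reidx (pr2 A B) b)) /\
    (forall A A' B (f : hom C A' A) (a : fib P (prod A B)),
        peq (ex1 A' B (reidx (fprod f (idm B)) a)) (reidx f (ex1 A B a))) /\
    (forall A B B' (f : hom C B' B) (a : fib P (prod A B)),
        peq (ex2 A B' (reidx (fprod (idm A) f) a)) (reidx f (ex2 A B a))).

Definition universal (C : CatFP) (P : Doctrine C) : Prop :=
  exists (all1 : forall A B, fib P (prod A B) -> fib P A)
         (all2 : forall A B, fib P (prod A B) -> fib P B),
    (forall A B (a : fib P (prod A B)) (b : fib P A),
        ple b (all1 A B a) <-> ple (reidx (pr1 A B) b) a) /\
    (forall A B (a : fib P (prod A B)) (b : fib P B),
        ple b (all2 A B a) <-> ple (reidx (pr2 A B) b) a) /\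
    (forall A A' B (f : hom C A' A) (a : fib P (prod A B)),
        peq (all1 A' B (reidx (fprod f (idm B)) a)) (reidx f (all1 A B a))) /\
    (forall A B B' (f : hom C B' B) (a : fib P (prod A B)),
        peq (all2 A B' (reidx (fprod (idm A) f) a)) (reidx f (all2 A B a))).

(** * Existential completion P^ex (on representatives (A,B,alpha);
    the poset P^ex(A) is the reflection of this preorder). *)
Definition PexT (C : CatFP) (P : Doctrine C) (A : ob C) : Type :=
  { B : ob C & fib P (prod A B) }.

Definition Pex_le (C : CatFP) (P : Doctrine C) (A : ob C) (x y : PexT P A) : Prop :=
  exists f : hom C (prod A (projT1 x)) (projT1 y),
    ple (projT2 x) (reidx (pair (pr1 A (projT1 x)) f) (projT2 y)).

Definition Pex_reidx (C : CatFP) (P : Doctrine C) (A D : ob C) (f : hom C A D)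
  (x : PexT P D) : PexT P A :=
  existT _ (projT1 x) (reidx (fprod f (idm (projT1 x))) (projT2 x)).

Definition Pex (C : CatFP) (P : Doctrine C) : Doctrine C :=
  {| fib := PexT P; ple := @Pex_le C P; reidx := @Pex_reidx C P |}.

(* Main.v *)
Require Import Defs.
From Stdlib Require Import IndefiniteDescription.

Lemma comp_pair (C : CatFP) (X Y A B : ob C) (f : hom C Y A) (g : hom C Y B) (h : hom C X Y) :
  comp (pair f g) h = pair (comp f h) (comp g h).
Proof.
  rewrite (pair_uniq (comp (pair f g) h)).
  rewrite !comp_assoc, pair_pr1, pair_pr2. reflexivity.
Qed.

Lemma hom_ext (C : CatFP) (X A B : ob C) (h k : hom C X (prod A B)) :
  comp (pr1 A B) h = comp (pr1 A B) k -> comp (pr2 A B) h = comp (pr2 A B) k -> h = k.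
Proof.
  intros H1 H2. rewrite (pair_uniq h), (pair_uniq k), H1, H2. reflexivity.
Qed.

Ltac catnorm :=
  repeat progress (first [ rewrite comp_pair | rewrite pair_pr1 | rewrite pair_pr2
                         | rewrite comp_idl | rewrite comp_idr | rewrite <- comp_assoc ]).

Ltac cateq := unfold fprod in *; catnorm;
  first [ reflexivity | apply hom_ext; cateq ].


Lemma ple_eq (C : CatFP) (Q : Doctrine C) A (a b : fib Q A) :
  is_doctrine Q -> a = b -> ple a b.
Proof. intros (Hr & _) E. rewrite E. apply Hr. Qed.

Definition swap (C : CatFP) (A B : ob C) : hom C (prod A B) (prod B A) :=
  pair (pr2 A B) (pr1 A B).
Arguments swap {C} A B.

Lemma existential_from1 (C : CatFP) (Q : Doctrine C) :
  is_doctrine Q ->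
  forall ex1 : (forall A B, fib Q (prod A B) -> fib Q A),
  (forall A B (a : fib Q (prod A B)) (b : fib Q A),
        ple (ex1 A B a) b <-> ple a (reidx (pr1 A B) b)) ->
  (forall A A' B (f : hom C A' A) (a : fib Q (prod A B)),
        peq (ex1 A' B (reidx (fprod f (idm B)) a)) (reidx f (ex1 A B a))) ->
  existential Q.
Proof.
  intros HQ. pose proof HQ as (Hr & Ht & Hm & Hi & Hc).
  intros ex1 Hadj Hbc.
  exists ex1, (fun A B a => ex1 B A (reidx (swap B A) a)).
  split; [exact Hadj|split; [|split; [exact Hbc|]]].
  - intros A B a b. rewrite Hadj. split; intro H.
    + apply (Hm _ _ (swap A B)) in H. rewrite <- !Hc in H.
      replace (comp (swap B A) (swap A B)) with (idm (prod A B)) in H by (unfold swap; cateq).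
      replace (comp (pr1 B A) (swap A B)) with (pr2 A B) in H by (unfold swap; cateq).
      rewrite Hi in H. exact H.
    + apply (Hm _ _ (swap B A)) in H. rewrite <- !Hc in H.
      replace (comp (pr2 A B) (swap B A)) with (pr1 B A) in H by (unfold swap; cateq).
      exact H.
  - intros A B B' f a. cbv beta. rewrite <- Hc.
    replace (comp (fprod (idm A) f) (swap B' A)) with (comp (swap B A) (fprod f (idm A)))
      by (unfold swap; cateq).
    rewrite Hc. apply Hbc.
Qed.

Lemma universal_from1 (C : CatFP) (Q : Doctrine C) :
  is_doctrine Q ->
  forall all1 : (forall A B, fib Q (prod A B) -> fib Q A),
  (forall A B (a : fib Q (prod A B)) (b : fib Q A),
        ple b (all1 A B a) <-> ple (reidx (pr1 A B) b) a) ->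
  (forall A A' B (f : hom C A' A) (a : fib Q (prod A B)),
        peq (all1 A' B (reidx (fprod f (idm B)) a)) (reidx f (all1 A B a))) ->
  universal Q.
Proof.
  intros HQ. pose proof HQ as (Hr & Ht & Hm & Hi & Hc).
  intros all1 Hadj Hbc.
  exists all1, (fun A B a => all1 B A (reidx (swap B A) a)).
  split; [exact Hadj|split; [|split; [exact Hbc|]]].
  - intros A B a b. rewrite Hadj. split; intro H.
    + apply (Hm _ _ (swap A B)) in H. rewrite <- !Hc in H.
      replace (comp (swap B A) (swap A B)) with (idm (prod A B)) in H by (unfold swap; cateq).
      replace (comp (pr1 B A) (swap A B)) with (pr2 A B) in H by (unfold swap; cateq).
      rewrite Hi in H. exact H.
    + apply (Hm _ _ (swap B A)) in H. rewrite <- !Hc in H.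
      replace (comp (pr2 A B) (swap B A)) with (pr1 B A) in H by (unfold swap; cateq).
      exact H.
  - intros A B B' f a. cbv beta. rewrite <- Hc.
    replace (comp (fprod (idm A) f) (swap B' A)) with (comp (swap B A) (fprod f (idm A)))
      by (unfold swap; cateq).
    rewrite Hc. apply Hbc.
Qed.

Lemma Pex_doctrine (C : CatFP) (P : Doctrine C) : is_doctrine P -> is_doctrine (Pex P).
Proof.
  intros HP. pose proof HP as (Hr & Ht & Hm & Hi & Hc).
  split; [|split; [|split; [|split]]].
  - intros A [B a]. exists (pr2 A B). simpl. apply ple_eq; [exact HP|].
    replace (pair (pr1 A B) (pr2 A B)) with (idm (prod A B)) by cateq. symmetry; apply Hi.
  - intros A [B a] [B' b] [D c] [f Hf] [g Hg]. simpl in *.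
    exists (comp g (pair (pr1 A B) f)). eapply Ht; [exact Hf|].
    apply (Hm _ _ (pair (pr1 A B) f)) in Hg. eapply Ht; [exact Hg|].
    rewrite <- Hc. apply ple_eq; [exact HP|]. f_equal. cateq.
  - intros A A' h [B a] [D b] [f Hf]. simpl in *.
    exists (comp f (fprod h (idm B))).
    apply (Hm _ _ (fprod h (idm B))) in Hf. eapply Ht; [exact Hf|].
    simpl; unfold Pex_reidx; simpl. rewrite <- !Hc. apply ple_eq; [exact HP|]. f_equal. cateq.
  - intros A [B a]. simpl; unfold Pex_reidx; simpl.
    replace (fprod (idm A) (idm B)) with (idm (prod A B)) by cateq. rewrite Hi. reflexivity.
  - intros A B D f g [X a]. simpl; unfold Pex_reidx; simpl. rewrite <- Hc.
    replace (comp (fprod g (idm X)) (fprod f (idm X))) with (fprod (comp g f) (idm X)) by cateq.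
    reflexivity.
Qed.

Definition assocm (C : CatFP) (A B D : ob C) : hom C (prod A (prod B D)) (prod (prod A B) D) :=
  pair (pair (pr1 A (prod B D)) (comp (pr1 B D) (pr2 A (prod B D)))) (comp (pr2 B D) (pr2 A (prod B D))).
Definition unassocm (C : CatFP) (A B D : ob C) : hom C (prod (prod A B) D) (prod A (prod B D)) :=
  pair (comp (pr1 A B) (pr1 (prod A B) D)) (pair (comp (pr2 A B) (pr1 (prod A B) D)) (pr2 (prod A B) D)).
Arguments assocm {C} A B D.
Arguments unassocm {C} A B D.

Definition Pex_ex1 (C : CatFP) (P : Doctrine C) (A B : ob C) (x : PexT P (prod A B)) : PexT P A :=
  existT _ (prod B (projT1 x)) (reidx (assocm A B (projT1 x)) (projT2 x)).

Lemma Pex_existential (C : CatFP) (P : Doctrine C) : is_doctrine P -> existential (Pex P).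
Proof.
  intros HP. pose proof HP as (Hr & Ht & Hm & Hi & Hc).
  pose proof (@Pex_doctrine C P HP) as HX.
  apply (@existential_from1 C (Pex P) HX (@Pex_ex1 C P)).
  - intros A B [D a] [E c]. simpl. unfold Pex_ex1; simpl. split; intros [f Hf]; unfold Pex_reidx in *; simpl in *.
    + exists (comp f (unassocm A B D)). unfold Pex_reidx; simpl.
      apply (Hm _ _ (unassocm A B D)) in Hf. rewrite <- !Hc in Hf.
      replace (comp (assocm A B D) (unassocm A B D)) with (idm (prod (prod A B) D)) in Hf
        by (unfold assocm, unassocm; cateq).
      rewrite Hi in Hf. eapply Ht; [exact Hf|].
      rewrite <- Hc. apply ple_eq; [exact HP|]. f_equal. unfold assocm, unassocm; cateq.
    + exists (comp f (assocm A B D)). unfold Pex_reidx; simpl.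
      apply (Hm _ _ (assocm A B D)) in Hf. eapply Ht; [exact Hf|].
      rewrite <- !Hc. apply ple_eq; [exact HP|]. f_equal. unfold assocm, unassocm; cateq.
  - intros A A' B f [D a]. simpl. unfold Pex_ex1, Pex_reidx; simpl.
    rewrite <- !Hc.
    replace (comp (fprod (fprod f (idm B)) (idm D)) (assocm A' B D))
      with (comp (assocm A B D) (fprod f (idm (prod B D)))) by (unfold assocm; cateq).
    destruct HX as (HXr & _). split; apply HXr.
Qed.

Lemma expo_choice (C : CatFP) (H : has_exponents C) :
  {E : ob C -> ob C -> ob C &
  {ev : forall B D, hom C (prod (E B D) B) D |
    forall B D X (g : hom C (prod X B) D), exists h, comp (ev B D) (fprod h (idm B)) = g}}.
Proof.
  pose (s1 := fun B D => constructive_indefinite_description _ (H B D)).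
  exists (fun B D => proj1_sig (s1 B D)).
  exists (fun B D => proj1_sig (constructive_indefinite_description _ (proj2_sig (s1 B D)))).
  intros B D X g.
  destruct (proj2_sig (constructive_indefinite_description _ (proj2_sig (s1 B D))) X g)
    as [h [Hh _]].
  exists h. exact Hh.
Qed.

Lemma ple_conv (C : CatFP) (Q : Doctrine C) A (a a' b b' : fib Q A) :
  a = a' -> b = b' -> ple a' b' -> ple a b.
Proof. intros -> ->; auto. Qed.
Arguments ple_conv {C Q A a a' b b'}.

Lemma le_pr2 (C : CatFP) (P : Doctrine C) : is_doctrine P ->
  forall A B (a b : fib P (prod A B)),
  ple a b -> Pex_le (existT (fun B0 => fib P (prod A B0)) B a) (existT _ B b).
Proof.
  intros HP. pose proof HP as (Hr & Ht & Hm & Hi & Hc). intros A B a b H.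
  exists (pr2 A B). simpl.
  replace (pair (pr1 A B) (pr2 A B)) with (idm (prod A B)) by cateq. rewrite Hi. exact H.
Qed.

Definition swapmid (C : CatFP) (A B F : ob C) : hom C (prod (prod A B) F) (prod (prod A F) B) :=
  pair (pair (comp (pr1 A B) (pr1 _ F)) (pr2 _ F)) (comp (pr2 A B) (pr1 _ F)).
Arguments swapmid {C} A B F.


Definition kmap (C : CatFP) (E : ob C -> ob C -> ob C) (ev : forall B D, hom C (prod (E B D) B) D)
  (A B D : ob C) : hom C (prod (prod A (E B D)) B) (prod (prod A B) D) :=
  pair (pair (comp (pr1 A (E B D)) (pr1 (prod A (E B D)) B)) (pr2 (prod A (E B D)) B))
       (comp (ev B D) (pair (comp (pr2 A (E B D)) (pr1 _ B)) (pr2 _ B))).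
Arguments kmap {C} E ev A B D.

Definition Pex_all1 (C : CatFP) (P : Doctrine C) (E : ob C -> ob C -> ob C)
  (ev : forall B D, hom C (prod (E B D) B) D)
  (pall1 : forall A B, fib P (prod A B) -> fib P A)
  (A B : ob C) (x : PexT P (prod A B)) : PexT P A :=
  existT _ (E B (projT1 x))
    (pall1 (prod A (E B (projT1 x))) B (reidx (@kmap C E ev A B (projT1 x)) (projT2 x))).

Lemma Pex_universal (C : CatFP) (P : Doctrine C) (E : ob C -> ob C -> ob C)
  (ev : forall B D, hom C (prod (E B D) B) D)
  (Hcur : forall B D X (g : hom C (prod X B) D), exists h, comp (ev B D) (fprod h (idm B)) = g)
  (pall1 : forall A B, fib P (prod A B) -> fib P A)
  (Hpadj : forall A B (a : fib P (prod A B)) (b : fib P A),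
        ple b (pall1 A B a) <-> ple (reidx (pr1 A B) b) a)
  (Hpbc : forall A A' B (f : hom C A' A) (a : fib P (prod A B)),
        peq (pall1 A' B (reidx (fprod f (idm B)) a)) (reidx f (pall1 A B a))) :
  is_doctrine P -> universal (Pex P).
Proof.
  intros HP. pose proof HP as (Hr & Ht & Hm & Hi & Hc).
  pose proof (@Pex_doctrine C P HP) as HX.
  apply (@universal_from1 C (Pex P) HX (@Pex_all1 C P E ev pall1)).
  - intros A B [D a] [F c]. simpl. unfold Pex_all1; simpl.
    split; intros [f Hf]; unfold Pex_reidx in *; simpl in *.
    + exists (comp (ev B D) (pair (comp f (pair (comp (pr1 A B) (pr1 (prod A B) F)) (pr2 (prod A B) F)))
                                  (comp (pr2 A B) (pr1 (prod A B) F)))).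
      unfold Pex_reidx; simpl.
      pose proof (Ht _ _ _ _ Hf (proj2 (Hpbc _ _ _ (pair (pr1 A F) f) (reidx (kmap E ev A B D) a)))) as H1.
      apply Hpadj in H1.
      apply (Hm _ _ (swapmid A B F)) in H1. rewrite <- !Hc in H1.
      refine (ple_conv _ _ H1); f_equal; unfold kmap, swapmid; cateq.
    + destruct (Hcur B D (prod A F) (comp f (swapmid A F B))) as [h Hh].
      exists h. unfold Pex_reidx; simpl.
      eapply Ht; [| apply (proj1 (Hpbc _ _ _ (pair (pr1 A F) h) (reidx (kmap E ev A B D) a)))].
      apply Hpadj.
      apply (Hm _ _ (swapmid A F B)) in Hf. rewrite <- !Hc in *.
      refine (ple_conv _ _ Hf); f_equal.
      * unfold swapmid; cateq.
      * replace (comp (pair (pr1 (prod A B) F) f) (swapmid A F B))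
          with (pair (comp (pr1 (prod A B) F) (swapmid A F B)) (comp (ev B D) (fprod h (idm B))))
          by (rewrite Hh, comp_pair; reflexivity).
        unfold kmap, swapmid; cateq.
  - intros A A' B f [D a]. simpl. unfold Pex_all1, Pex_reidx; simpl.
    rewrite <- Hc.
    replace (comp (fprod (fprod f (idm B)) (idm D)) (kmap E ev A' B D))
      with (comp (kmap E ev A B D) (fprod (fprod f (idm (E B D))) (idm B))) by (unfold kmap; cateq).
    rewrite Hc.
    destruct (Hpbc _ _ _ (fprod f (idm (E B D))) (reidx (kmap E ev A B D) a)) as [H1 H2].
    split; apply le_pr2; assumption.
Qed.

Theorem theorem6 (C : CatFP) (P : Doctrine C) :
  is_pos_doctrine P -> universal P -> has_exponents C ->
  is_doctrine (Pex P) /\ existential (Pex P) /\ universal (Pex P).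
Proof.
  intros [HP _] [pall1 [pall2 [Hpadj [_ [Hpbc _]]]]] Hexp.
  destruct (@expo_choice C Hexp) as [E [ev Hcur]].
  split; [exact (@Pex_doctrine C P HP)|split].
  - exact (@Pex_existential C P HP).
  - exact (@Pex_universal C P E ev Hcur pall1 Hpadj Hpbc HP).
Qed.
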